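(* Assume there are constants $\gamma_t\ge 0$ ($t=0,\dots,T-1$) with $|C_t(x)-C_t(y)|\le\gamma_t|x-y|$ for all $x,y$. Then for every $t=0,1,\dots,T-1$ and all $x'\le x$: $H_t(x')-H_t(x)\le\bar\psi_t(x-x',x)$ and $V_t(x')-V_t(x)\le\bar\varphi_t(x-x',x)$.
   Context: Model. Fix an integer horizon $T\ge 2$, a discount factor $\alpha\in(0,1]$, and for $t=0,\dots,T-1$: unit ordering costs $c_t\in\mathbb R$, a salvage coefficient $c_T\in\mathbb R$, setup costs $K_t\ge 0$, functions $G_t:\mathbb R\to\mathbb R$, and independent nonnegative random demands $D_0,\dots,D_{T-1}$ with right-continuous distribution functions $F_t$ and finite means; all expectations appearing are assumed finite. Put $C_t(y)=(c_t-\alpha c_{t+1})y+G_t(y)+\alpha c_{t+1}E[D_t]$. Standing assumptions: (i) each $C_t$ is convex with $C_t(y)\to+\infty$ as $|y|\to\infty$; (ii) $K_t\ge \alpha K_{t+1}$ for $t=0,\dots,T-2$. Grid construction. Fix $\theta>0$, $z_m=m\theta$, $Z_\theta=\{z_m:m\in\mathbb Z\}$, $f_t(n)=F_t(z_{n+1})-F_t(z_n)$ ($n\ge -1$). $C^m_t=\min\{y: C_t(y)=\min_x C_t(x)\}$; with $z_{n_0}<C^m_t\le z_{n_0+1}$, $S^U_t=\min\{z_m\in Z_\theta: z_m\ge C^m_t,\ C_t(z_m)>C_t(z_{n_0})+K_t\}$. $s_{T-1}$ is a point with $s_{T-1}\le C^m_{T-1}$, $C_{T-1}(s_{T-1})=C_{T-1}(C^m_{T-1})+K_{T-1}$;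 $\bar I_{T-1}=s_{T-1}$. For $t=T-2,\dots,0$: $I_t=\max\{z_m\in Z_\theta: z_m<\min(\bar I_{t+1}-\theta,C^m_t)\}$, $\bar I_t=\max\{z_m\in Z_\theta: z_m\le I_t,\ C_t(z_m)>C_t(I_t)+K_t\}+\theta$. $H_{T-1}=C_{T-1}$, $S_{T-1}=C^m_{T-1}$; $V_t(y)=H_t(S_t)+K_t$ for $y<s_t$, $V_t(y)=H_t(y)$ for $y\ge s_t$. For $t=T-2,\dots,0$: $H_t(y)=C_t(y)+\alpha\sum_{n=-1}^\infty V_{t+1}(y-z_n)f_t(n)$; $S_t=\max\{z_m\in Z_\theta: I_t\le z_m\le S^U_t,\ H_t(z_m)=\min\{H_t(z_n):z_n\in Z_\theta, I_t\le z_n\le S^U_t\}\}$; $s_t=S_t$ if $K_t=0$, else $s_t=\min\{z_m\in Z_\theta:\bar I_t\le z_m\le S_t,\ H_t(z_m)\le H_t(S_t)+K_t\}$. Upper estimate functions. $\bar\psi_{T-1}(x,y)=\gamma_{T-1}x$ for all $x,y$; $\bar\varphi_{T-1}(x,y)=0$ if $y<s_{T-1}$ and $\bar\varphi_{T-1}(x,y)=\gamma_{T-1}x$ if $y\ge s_{T-1}$. For $t=0,\dots,T-2$: $\bar\psi_t(x,y)=\gamma_tx$ if $y<s_{t+1}-\theta$, and otherwise $\bar\psi_t(x,y)=\gamma_tx+\alpha\sum_{m=-1}^{n-1}\bar\varphi_{t+1}(x,y-z_m)f_t(m)$, where $n$ is the integer with $z_{n-1}\le y-s_{t+1}<z_n$;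 and $\bar\varphi_t(x,y)=0$ if $y<s_t$, $\bar\varphi_t(x,y)=\bar\psi_t(y-s_t+\theta,y)$ if $y\ge s_t$ and $y-x<s_t$, $\bar\varphi_t(x,y)=\bar\psi_t(x,y)$ if $y\ge s_t$ and $y-x\ge s_t$. *)

(* Defs.v *)
From HB Require Import structures.
From mathcomp Require Import all_boot all_order all_algebra.
From mathcomp Require Import all_classical all_reals all_analysis.
Set Implicit Arguments. Unset Strict Implicit. Unset Printing Implicit Defensive.
Import Order.TTheory GRing.Theory Num.Theory.
Import numFieldNormedType.Exports.
Local Open Scope classical_set_scope.
Local Open Scope ring_scope.

Definition convex_fun {R : realType} (g : R -> R) : Prop :=
  forall (x y l : R), 0 <= l -> l <= 1 ->
    g (l * x + (1 - l) * y) <= l * g x + (1 - l) * g y.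

Definition coercive {R : realType} (g : R -> R) : Prop :=
  forall M : R, exists N : R, forall y : R, N <= `|y| -> M <= g y.

Definition mutually_independent_RVs {d} {Omega : measurableType d}
  {R : realType} (P : probability Omega R) (T : nat) (X : nat -> {RV P >-> R})
  : Prop :=
  forall (I : seq nat) (B : nat -> set R),
    uniq I -> all (fun t => (t < T)%N) I ->
    (forall t, measurable (B t)) ->
    P (\big[setI/setT]_(t <- I) (X t @^-1` B t)) =
    (\prod_(t <- I) P (X t @^-1` B t))%E.

Section Model.
Variables (R : realType) (T : nat) (alpha : R) (c : nat -> R) (K : nat -> R)
  (G : nat -> R -> R) (F : nat -> R -> R) (mu : nat -> R) (theta : R)
  (sT1 : R) (gamma : nat -> R).

Definition z (m : int) : R := m%:~R * theta.
Definition on_grid (y : R) : Prop := exists m : int, y = z m.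
Definition gridmax (Q : R -> Prop) : R := sup [set y | on_grid y /\ Q y].
Definition gridmin (Q : R -> Prop) : R := inf [set y | on_grid y /\ Q y].

Definition Cfun (t : nat) (y : R) : R :=
  (c t - alpha * c t.+1) * y + G t y + alpha * c t.+1 * mu t.

Definition fdisc (t : nat) (n : int) : R := F t (z (n + 1)) - F t (z n).

Definition Cm (t : nat) : R := inf [set y | forall x, Cfun t y <= Cfun t x].
Definition zn0 (t : nat) : R := gridmax (fun y => y < Cm t).
Definition SU (t : nat) : R :=
  gridmin (fun y => Cm t <= y /\ Cfun t (zn0 t) + K t < Cfun t y).

Record stage := Stage { sH : R -> R; sS : R; ss : R; sbarI : R }.

Definition Vof (t : nat) (st : stage) (y : R) : R :=
  if y < ss st then sH st (sS st) + K t else sH st y.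

(* sum_{n = -1}^oo u n, as the limit of partial sums (index k = n + 1) *)
Definition sum_from_m1 (u : int -> R) : R :=
  limn (series (fun k : nat => u (k%:Z - 1))).

Definition stage_base : stage :=
  Stage (Cfun T.-1) (Cm T.-1) sT1 sT1.

Definition stage_step (t : nat) (nx : stage) : stage :=
  let I := gridmax (fun y => y < Num.min (sbarI nx - theta) (Cm t)) in
  let bI := gridmax (fun y => y <= I /\ Cfun t I + K t < Cfun t y) + theta in
  let H := fun y => Cfun t y +
             alpha * sum_from_m1 (fun n => Vof t.+1 nx (y - z n) * fdisc t n) in
  let Hmin := inf [set H y | y in [set y | on_grid y /\ I <= y <= SU t]] in
  let S := gridmax (fun y => I <= y <= SU t /\ H y = Hmin) in
  let s := if K t == 0 then S
           else gridmin (fun y => bI <= y <= S /\ H y <= H S + K t) in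
  Stage H S s bI.

(* stage_k k is the data of period t = T-1-k *)
Fixpoint stage_k (k : nat) : stage :=
  match k with
  | 0 => stage_base
  | k'.+1 => stage_step (T - 2 - k') (stage_k k')
  end.

Definition stage_of (t : nat) : stage := stage_k (T.-1 - t).
Definition H (t : nat) : R -> R := sH (stage_of t).
Definition S (t : nat) : R := sS (stage_of t).
Definition s (t : nat) : R := ss (stage_of t).
Definition barI (t : nat) : R := sbarI (stage_of t).
Definition V (t : nat) : R -> R := Vof t (stage_of t).

Definition psi_step (t : nat) (phinext : R -> R -> R) (x y : R) : R :=
  if y < s t.+1 - theta then gamma t * x
  else
    let n := Num.floor ((y - s t.+1) / theta) + 1 in
    (* n is the integer with z_{n-1} <= y - s_{t+1} < z_n; sum over m = -1..n-1 *)
    gamma t * x + alpha *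
      \sum_(0 <= j < absz (n + 1)) (phinext x (y - z (j%:Z - 1)) * fdisc t (j%:Z - 1)).

Definition phi_from (t : nat) (psi : R -> R -> R) (x y : R) : R :=
  if y < s t then 0
  else if y - x < s t then psi (y - s t + theta) y
  else psi x y.

Fixpoint phi_k (k : nat) : R -> R -> R :=
  match k with
  | 0 => fun x y => if y < s T.-1 then 0 else gamma T.-1 * x
  | k'.+1 => phi_from (T - 2 - k') (psi_step (T - 2 - k') (phi_k k'))
  end.

Definition phibar (t : nat) : R -> R -> R := phi_k (T.-1 - t).
Definition psibar (t : nat) : R -> R -> R :=
  if t == T.-1 then fun x _ => gamma t * x else psi_step t (phibar t.+1).

End Model.

(* Main.v *)
Require Import Defs.
From HB Require Import structures.
From mathcomp Require Import all_boot all_order all_algebra.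
From mathcomp Require Import all_classical all_reals all_analysis.
From mathcomp Require Import lra zify.
Import Order.TTheory GRing.Theory Num.Theory.
Import numFieldNormedType.Exports.
Local Open Scope classical_set_scope.
Local Open Scope ring_scope.
Lemma grid_gap {R : realType} (th a b : R) : 0 < th ->
  on_grid th a -> on_grid th b -> a < b -> a + th <= b.
Proof.
move=> th0 [m ->] [n ->]; rewrite /z => ab.
have : m%:~R < n%:~R :> R by rewrite -(ltr_pM2r th0).
rewrite ltr_int -lezD1 -(ler_int R) -(ler_pM2r th0) intrD mulrDl mul1r.
done.
Qed.

Lemma grid_below {R : realType} (th r : R) : 0 < th ->
  exists y, on_grid th y /\ y < r.
Proof.
move=> th0; exists (z th (Num.floor (r / th) - 1)); split; first by exists (Num.floor (r / th) - 1).
rewrite /z intrD mulrDl mulN1r.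
have := floor_le (r / th); rewrite -(ler_pM2r th0) mulfVK ?gt_eqF //.
lra.
Qed.

Lemma grid_above {R : realType} (th r : R) : 0 < th ->
  exists y, on_grid th y /\ r < y.
Proof.
move=> th0; exists (z th (Num.floor (r / th) + 1)); split; first by exists (Num.floor (r / th) + 1).
rewrite /z; have /andP[_ h] := floor_itv (r / th).
by rewrite -(ltr_pM2r th0) mulfVK ?gt_eqF // in h.
Qed.

Lemma grid_subth {R : realType} (th a : R) : on_grid th a -> on_grid th (a - th).
Proof. by move=> [m ->]; exists (m - 1); rewrite /z intrD mulrDl mulN1r. Qed.

Lemma grid_addth {R : realType} (th a : R) : on_grid th a -> on_grid th (a + th).
Proof. by move=> [m ->]; exists (m + 1); rewrite /z intrD mulrDl mul1r. Qed.

Lemma gridmax_spec {R : realType} (th : R) (Q : R -> Prop) : 0 < th ->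
  (exists y, on_grid th y /\ Q y) ->
  (exists b, forall y, on_grid th y -> Q y -> y <= b) ->
  [/\ on_grid th (gridmax th Q), Q (gridmax th Q) &
      forall y, on_grid th y -> Q y -> y <= gridmax th Q].
Proof.
move=> th0 [y0 [gy0 Qy0]] [b hb].
set E := [set y | on_grid th y /\ Q y].
have hs : has_sup E by split; [exists y0 | exists b => y [gy Qy]; exact: hb].
have ub := ub_le_sup (proj2 hs).
have [e Ee he] := sup_adherent th0 hs.
have e_eq : e = sup E.
  apply/eqP; rewrite eq_le (ub _ Ee) /= leNgt; apply/negP => lt.
  have [e' Ee' he'] := sup_adherent (ltac:(by rewrite subr_gt0) : 0 < sup E - e) hs.
  have := @grid_gap R th e e' th0 Ee.1 Ee'.1 ltac:(lra).
  have := ub _ Ee'; lra.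
rewrite /gridmax -/E -e_eq; split; [exact: Ee.1 | exact: Ee.2 |].
by move=> y gy Qy; rewrite e_eq; apply: ub.
Qed.

Lemma gridmin_spec {R : realType} (th : R) (Q : R -> Prop) : 0 < th ->
  (exists y, on_grid th y /\ Q y) ->
  (exists b, forall y, on_grid th y -> Q y -> b <= y) ->
  [/\ on_grid th (gridmin th Q), Q (gridmin th Q) &
      forall y, on_grid th y -> Q y -> gridmin th Q <= y].
Proof.
move=> th0 [y0 [gy0 Qy0]] [b hb].
set E := [set y | on_grid th y /\ Q y].
have hs : has_inf E by split; [exists y0 | exists b => y [gy Qy]; exact: hb].
have lb := ge_inf (proj2 hs).
have [e Ee he] := inf_adherent th0 hs.
have e_eq : e = inf E.
  apply/eqP; rewrite eq_le (lb _ Ee) andbT leNgt; apply/negP => lt.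
  have [e' Ee' he'] := inf_adherent (ltac:(by rewrite subr_gt0) : 0 < e - inf E) hs.
  have := @grid_gap R th e' e th0 Ee'.1 Ee.1 ltac:(lra).
  have := lb _ Ee'; lra.
rewrite /gridmin -/E -e_eq; split; [exact: Ee.1 | exact: Ee.2 |].
by move=> y gy Qy; rewrite e_eq; apply: lb.
Qed.
Lemma grid_shift {R : realType} (th a : R) (k : nat) :
  on_grid th a -> on_grid th (a + k%:R * th).
Proof. by move=> [m ->]; exists (m + k%:Z); rewrite /z intrD mulrDl. Qed.

Lemma grid_argmin_aux {R : realType} (th : R) (f : R -> R) (a : R) (k : nat) :
  0 < th -> on_grid th a ->
  exists y0, [/\ on_grid th y0, a <= y0 <= a + k%:R * th &
    forall y, on_grid th y -> a <= y <= a + k%:R * th -> f y0 <= f y].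
Proof.
move=> th0 ga; elim: k => [|k [y1 [gy1 /andP[y1a y1b] hy1]]].
  exists a; rewrite mul0r addr0 lexx; split => // y _ /andP[h1 h2].
  by have -> : y = a by apply/eqP; rewrite eq_le h1 h2.
have gp := @grid_shift R th a k.+1 ga.
have stepk : a + k.+1%:R * th = a + k%:R * th + th by rewrite -natr1 mulrDl mul1r addrA.
have thk : 0 <= k%:R * th by rewrite mulr_ge0 // ltW.
case: (ltP (f (a + k.+1%:R * th)) (f y1)) => hf.
  exists (a + k.+1%:R * th); split => //; first by rewrite lexx andbT stepk; lra.
  move=> y gy /andP[ya yb].
  case: (leP y (a + k%:R * th)) => yk.
    by apply: le_trans (ltW hf) (hy1 y gy _); rewrite ya yk.
  have := @grid_gap R th _ _ th0 (@grid_shift R th a k ga) gy yk.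
  rewrite -stepk => h.
  by have -> : y = a + k.+1%:R * th by apply/eqP; rewrite eq_le yb h.
exists y1; split => //; first by rewrite y1a /= stepk; lra.
move=> y gy /andP[ya yb].
case: (leP y (a + k%:R * th)) => yk; first by apply: hy1 => //; rewrite ya yk.
have := @grid_gap R th _ _ th0 (@grid_shift R th a k ga) gy yk.
rewrite -stepk => h.
by have -> : y = a + k.+1%:R * th by apply/eqP; rewrite eq_le yb h.
Qed.

Lemma grid_argmin {R : realType} (th : R) (f : R -> R) (a b : R) :
  0 < th -> on_grid th a -> a <= b ->
  exists y0, [/\ on_grid th y0, a <= y0 <= b &
    forall y, on_grid th y -> a <= y <= b -> f y0 <= f y].
Proof.
move=> th0 ga ab; have [ma ea] := ga.
set mb := Num.floor (b / th).
have mab : ma <= mb.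
  rewrite /mb floor_ge_int ler_pdivlMr // -/(z th ma) -ea //.
have ek : a + (absz (mb - ma))%:R * th = z th mb.
  rewrite ea /z -mulrDl; congr (_ * _).
  have h : (mb - ma) = (absz (mb - ma))%:Z by rewrite gez0_abs // subr_ge0.
  have h2 : ((mb - ma)%:~R : R) = (absz (mb - ma))%:R by rewrite {1}h.
  rewrite -h2 intrD intrN; lra.
have [y0 [gy0 /andP[y0a y0b] hy0]] := @grid_argmin_aux R th f a (absz (mb - ma)) th0 ga.
have zb : z th mb <= b by rewrite /z -ler_pdivlMr // floor_le.
rewrite ek in y0b hy0.
exists y0; split => //; first by rewrite y0a /=; exact: le_trans zb.
move=> y [m ->] /andP[ya yb]; apply: hy0; first by exists m.
rewrite ya /= /z ler_pM2r // ler_int /mb floor_ge_int ler_pdivlMr //.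
Qed.
Lemma Vstep {R : realType} (Hf : R -> R) (S0 s0 K0 th : R) (psi : R -> R -> R) :
  (forall x' x, x' <= x -> Hf x' - Hf x <= psi (x - x') x) ->
  (forall y a b, a <= b -> psi a y <= psi b y) ->
  (exists y, s0 - th <= y <= s0 /\ Hf S0 + K0 <= Hf y) ->
  forall x' x, x' <= x ->
   (if x' < s0 then Hf S0 + K0 else Hf x') - (if x < s0 then Hf S0 + K0 else Hf x)
   <= (if x < s0 then 0 else if x - (x - x') < s0 then psi (x - s0 + th) x
       else psi (x - x') x).
Proof.
move=> Hb mono [y [/andP[y1 y2] hy]] x' x xx.
have e : x - (x - x') = x' by rewrite opprB addrCA subrr addr0.
rewrite e.
case: (ltP x s0) => hx.
  have -> : x' < s0 by apply: le_lt_trans xx hx.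
  by rewrite subrr.
case: (ltP x' s0) => hx'; last exact: Hb.
have h1 := Hb y x ltac:(lra).
have h2 : psi (x - y) x <= psi (x - s0 + th) x by apply: mono; lra.
lra.
Qed.

Lemma series_step {R : realType} (a' a b : nat -> R) (M : nat) :
  cvgn (series a') -> cvgn (series a) -> (forall k, a' k - a k <= b k) ->
  (forall k, (M <= k)%N -> b k = 0) ->
  limn (series a') - limn (series a) <= \sum_(0 <= k < M) b k.
Proof.
move=> c1 c2 hab hb; rewrite -lim_seriesB //.
apply: limr_le; first exact: is_cvg_seriesB.
exists M => // N /= MN.
rewrite /series /=.
apply: le_trans (ler_sum _ (fun k _ => hab k)) _.
rewrite (big_cat_nat (leq0n M) MN) /= [X in _ + X]big_nat_cond.
rewrite [X in _ + X]big1 ?addr0 // => k /andP[/andP[kM _] _].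
exact: hb.
Qed.

Arguments grid_gap {R th a b}.
Arguments grid_below {R th} r.
Arguments grid_above {R th} r.
Arguments grid_subth {R th a}.
Arguments grid_addth {R th a}.
Arguments gridmax_spec {R th Q}.
Arguments gridmin_spec {R th Q}.
Arguments grid_argmin {R th} f {a b}.
Definition Ist {R : realType} (alpha : R) (c K : nat -> R) (G : nat -> R -> R) (F : nat -> R -> R) (mu : nat -> R) (theta : R) (t : nat) (nx : stage R) :=
  gridmax theta (fun y => y < Num.min (sbarI nx - theta) (Cm alpha c G mu t)).
Definition bIst {R : realType} (alpha : R) (c K : nat -> R) (G : nat -> R -> R) (F : nat -> R -> R) (mu : nat -> R) (theta : R) (t : nat) (nx : stage R) :=
  gridmax theta (fun y => y <= Ist alpha c K G F mu theta t nx /\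
     Cfun alpha c G mu t (Ist alpha c K G F mu theta t nx) + K t < Cfun alpha c G mu t y) + theta.
Definition HFst {R : realType} (alpha : R) (c K : nat -> R) (G : nat -> R -> R) (F : nat -> R -> R) (mu : nat -> R) (theta : R) (t : nat) (nx : stage R) :=
  fun y => Cfun alpha c G mu t y +
             alpha * sum_from_m1 (fun n => Vof K t.+1 nx (y - z theta n) * fdisc F theta t n).
Definition Hminst {R : realType} (alpha : R) (c K : nat -> R) (G : nat -> R -> R) (F : nat -> R -> R) (mu : nat -> R) (theta : R) (t : nat) (nx : stage R) :=
  inf [set HFst alpha c K G F mu theta t nx y | y in
       [set y | on_grid theta y /\ Ist alpha c K G F mu theta t nx <= y <= SU alpha c K G mu theta t]].
Definition Sst {R : realType} (alpha : R) (c K : nat -> R) (G : nat -> R -> R) (F : nat -> R -> R) (mu : nat -> R) (theta : R) (t : nat) (nx : stage R) :=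
  gridmax theta (fun y => Ist alpha c K G F mu theta t nx <= y <= SU alpha c K G mu theta t /\
     HFst alpha c K G F mu theta t nx y = Hminst alpha c K G F mu theta t nx).
Definition sst {R : realType} (alpha : R) (c K : nat -> R) (G : nat -> R -> R) (F : nat -> R -> R) (mu : nat -> R) (theta : R) (t : nat) (nx : stage R) :=
  if K t == 0 then Sst alpha c K G F mu theta t nx
  else gridmin theta (fun y => bIst alpha c K G F mu theta t nx <= y <= Sst alpha c K G F mu theta t nx /\
        HFst alpha c K G F mu theta t nx y <=
        HFst alpha c K G F mu theta t nx (Sst alpha c K G F mu theta t nx) + K t).

Lemma stage_step_eq {R : realType} (alpha : R) (c K : nat -> R) (G : nat -> R -> R) (F : nat -> R -> R) (mu : nat -> R) (theta : R) (t : nat) (nx : stage R) :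
  stage_step alpha c K G F mu theta t nx =
  Stage (HFst alpha c K G F mu theta t nx) (Sst alpha c K G F mu theta t nx)
        (sst alpha c K G F mu theta t nx) (bIst alpha c K G F mu theta t nx).
Proof. reflexivity. Qed.

Lemma z_ge {R : realType} (theta : R) (k : nat) : 0 < theta -> - theta <= z theta (k%:Z - 1).
Proof.
move=> th0; rewrite /z intrD mulrDl mulN1r.
have : 0 <= (k%:Z)%:~R * theta :> R.
  by apply: mulr_ge0; [rewrite ler0z | exact: ltW].
lra.
Qed.

Arguments z_ge {R theta} k.

Lemma stage_facts {R : realType} (alpha : R) (c K : nat -> R) (G : nat -> R -> R) (F : nat -> R -> R) (mu : nat -> R) (theta : R) (t : nat) (nx : stage R) :
  0 < theta -> 0 <= K t -> coercive (Cfun alpha c G mu t) -> sbarI nx <= ss nx ->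
  forall st, st = stage_step alpha c K G F mu theta t nx ->
  (exists y, ss st - theta <= y <= ss st /\ sH st (sS st) + K t <= sH st y) /\
  sbarI st <= ss st.
Proof.
move=> th0 K0 coer bInx st ->; rewrite stage_step_eq /=.
set I := Ist alpha c K G F mu theta t nx.
set Cf := Cfun alpha c G mu t.
set HF := HFst alpha c K G F mu theta t nx.
have [gI I1 _] : [/\ on_grid theta I, I < Num.min (sbarI nx - theta) (Cm alpha c G mu t) & _] :=
  gridmax_spec th0 (grid_below _ th0) (ex_intro _ _ (fun y _ hy => ltW hy)).
move: I1; rewrite lt_min => /andP[IbI ICm].
set b0 := gridmax theta (fun y => y <= I /\ Cf I + K t < Cf y).
have [gb0 [b0I hb0] _] : [/\ on_grid theta b0, b0 <= I /\ Cf I + K t < Cf b0 &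
   forall y, on_grid theta y -> y <= I /\ Cf I + K t < Cf y -> y <= b0].
  apply: gridmax_spec => //; last by exists I => y _ [].
  have [N hN] := coer (Cf I + K t + 1).
  have [y [gy]] := grid_below (Num.min I (- `|N|)) th0.
  rewrite lt_min => /andP[yI yN].
  exists y; split => //; split; first exact: ltW.
  have : N <= `|y|.
    apply: le_trans (ler_norm N) _; rewrite ler_normr; apply/orP; right; lra.
  move/hN; rewrite -/Cf => hh; lra.
have b0ltI : b0 < I by rewrite lt_neqAle b0I andbT; apply/eqP => e; move: hb0; rewrite e; lra.
have bIleI : b0 + theta <= I := grid_gap th0 gb0 gI b0ltI.
have bIE : bIst alpha c K G F mu theta t nx = b0 + theta by [].
rewrite bIE.
set SUv := SU alpha c K G mu theta t.
have [gSU [CmSU _] _] : [/\ on_grid theta SUv,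
    Cm alpha c G mu t <= SUv /\ Cf (zn0 alpha c G mu theta t) + K t < Cf SUv &
    forall y, on_grid theta y -> Cm alpha c G mu t <= y /\ Cf (zn0 alpha c G mu theta t) + K t < Cf y -> SUv <= y].
  apply: gridmin_spec => //; last by exists (Cm alpha c G mu t) => y _ [].
  have [N hN] := coer (Cf (zn0 alpha c G mu theta t) + K t + 1).
  have [y [gy]] := grid_above (Num.max (Cm alpha c G mu t) `|N|) th0.
  rewrite gt_max => /andP[yC yN].
  exists y; split => //; split; first exact: ltW.
  have : N <= `|y|.
    apply: le_trans (ler_norm N) _; rewrite ler_normr; apply/orP; left; lra.
  move/hN; rewrite -/Cf => hh; lra.
have ISU : I <= SUv by apply: ltW; apply: lt_le_trans ICm CmSU.
have [y0 [gy0 y0r hy0]] := grid_argmin HF th0 gI ISU.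
have Hmin_eq : Hminst alpha c K G F mu theta t nx = HF y0.
  rewrite /Hminst -/I -/SUv -/HF.
  set E := [set HF y | y in [set y | on_grid theta y /\ I <= y <= SUv]].
  have lbE : lbound E (HF y0) by move=> _ [y [gy hy] <-]; exact: hy0.
  have Ey0 : E (HF y0) by exists y0.
  apply/eqP; rewrite eq_le; apply/andP; split.
    exact: (ge_inf (ex_intro _ _ lbE) Ey0).
  by apply: lb_le_inf => //; exists (HF y0).
set Sv := Sst alpha c K G F mu theta t nx.
have [gS [/andP[IS SSU] HS] _] : [/\ on_grid theta Sv, (I <= Sv <= SUv) /\ HF Sv = Hminst alpha c K G F mu theta t nx &
   forall y, on_grid theta y -> (I <= y <= SUv) /\ HF y = Hminst alpha c K G F mu theta t nx -> y <= Sv].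
  apply: gridmax_spec => //; first by exists y0; split => //; split.
  by exists SUv => y _ [/andP[]].
have HSI : HF Sv <= HF I by rewrite HS Hmin_eq; apply: hy0 => //; rewrite lexx ISU.
rewrite /sst -/Sv -/HF bIE.
case: eqP => hK.
  split; last by lra.
  by exists Sv; rewrite hK addr0 lexx; split => //; lra.
set sv := gridmin theta _.
have [gs [/andP[bIs sS] hs] smin] : [/\ on_grid theta sv,
    (b0 + theta <= sv <= Sv) /\ HF sv <= HF Sv + K t & forall y, on_grid theta y ->
    (b0 + theta <= y <= Sv) /\ HF y <= HF Sv + K t -> sv <= y].
  apply: gridmin_spec => //.
    exists Sv; split => //; split; first by apply/andP; split; lra.
    lra.
  exists (b0 + theta) => y _ [hy _].
  by case/andP: hy.
split => //; exists (sv - theta); split; first by lra.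
case: (ltP (sv - theta) (b0 + theta)) => h.
  have svE : sv = b0 + theta.
    apply/eqP; rewrite eq_le bIs andbT leNgt; apply/negP => lt.
    have := grid_gap th0 (grid_addth gb0) gs lt; lra.
  have -> : sv - theta = b0 by rewrite svE addrK.
  have sumeq : HF b0 - HF I = Cf b0 - Cf I.
    rewrite /HF /HFst -/Cf.
    suff -> : sum_from_m1 (fun n => Vof K t.+1 nx (b0 - z theta n) * fdisc F theta t n) =
              sum_from_m1 (fun n => Vof K t.+1 nx (I - z theta n) * fdisc F theta t n) by lra.
    rewrite /sum_from_m1; congr (limn (series _)); apply/funext => k /=.
    have hz := z_ge k th0.
    rewrite /Vof !ifT //; lra.
  lra.
case: (leP (HF (sv - theta)) (HF Sv + K t)) => h2; last by lra.
have hb : b0 + theta <= sv - theta <= Sv by apply/andP; split; lra.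
have := smin (sv - theta) (grid_subth gs) (conj hb h2).
lra.
Qed.
Lemma pf_mono {R : realType} (s0 th : R) (psi : R -> R -> R) : 0 <= th ->
  (forall y a b, a <= b -> psi a y <= psi b y) -> forall y a b, a <= b ->
  (if y < s0 then 0 else if y - a < s0 then psi (y - s0 + th) y else psi a y) <=
  (if y < s0 then 0 else if y - b < s0 then psi (y - s0 + th) y else psi b y).
Proof.
move=> th0 m y a b ab; case: ifP => // _.
case: (ltP (y - a) s0) => h1; first by rewrite ifT ?lexx //; lra.
case: (ltP (y - b) s0) => h2; [apply: m; lra | exact: m].
Qed.

Lemma stage_kS {R : realType} T (alpha : R) c K G F mu theta sT1 k :
  stage_k T alpha c K G F mu theta sT1 k.+1 =
  stage_step alpha c K G F mu theta (T - 2 - k) (stage_k T alpha c K G F mu theta sT1 k).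
Proof. by []. Qed.

Lemma phi_kS {R : realType} T (alpha : R) c K G F mu theta sT1 gamma k :
  phi_k T alpha c K G F mu theta sT1 gamma k.+1 =
  phi_from T alpha c K G F mu theta sT1 (T - 2 - k)
    (psi_step T alpha c K G F mu theta sT1 gamma (T - 2 - k) (phi_k T alpha c K G F mu theta sT1 gamma k)).
Proof. by []. Qed.

Lemma absz_le_aux (m : int) (j : nat) : (0 <= m)%R -> (absz (m + 1)%R <= j)%N -> (m <= j%:Z - 1)%R.
Proof. move=> hm hj; lia. Qed.

Lemma int_aux2 (m : int) : (-1 <= m)%R -> (0 <= m + 1)%R.
Proof. move=> h; lia. Qed.

Theorem lemma4p5 (d : measure_display) (Omega : measurableType d)
  (R : realType) (P : probability Omega R) (D : nat -> {RV P >-> R})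
  (T : nat) (alpha : R) (c K : nat -> R) (G : nat -> R -> R)
  (theta sT1 : R) (gamma : nat -> R) :
  let F : nat -> R -> R := fun t r => fine (cdf (D t) r) in
  let mu : nat -> R := fun t => fine ('E_P[D t])%E in
  (2 <= T)%N ->
  0 < alpha -> alpha <= 1 ->
  (* demands: nonnegative, finite means, independent *)
  (forall t, (t < T)%N -> forall w, 0 <= D t w) ->
  (forall t, (t < T)%N -> P.-integrable setT (EFin \o D t)) ->
  @mutually_independent_RVs _ _ _ P T D ->
  (* setup costs *)
  (forall t, (t < T)%N -> 0 <= K t) ->
  (forall t, (t.+2 <= T)%N -> alpha * K t.+1 <= K t) ->
  (* standing assumption (i) *)
  (forall t, (t < T)%N ->
     convex_fun (Cfun alpha c G mu t) /\ coercive (Cfun alpha c G mu t)) ->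
  (* grid *)
  0 < theta ->
  (* s_{T-1} *)
  sT1 <= Cm alpha c G mu T.-1 ->
  Cfun alpha c G mu T.-1 sT1 =
    Cfun alpha c G mu T.-1 (Cm alpha c G mu T.-1) + K T.-1 ->
  (* all expectations appearing are finite *)
  (forall t, (t.+2 <= T)%N -> forall y : R,
     cvgn (series (fun k : nat =>
       `|V T alpha c K G F mu theta sT1 t.+1 (y - z theta (k%:Z - 1))
          * fdisc F theta t (k%:Z - 1)|))) ->
  (* Lipschitz constants *)
  (forall t, (t < T)%N -> 0 <= gamma t) ->
  (forall t, (t < T)%N -> forall x y : R,
     `|Cfun alpha c G mu t x - Cfun alpha c G mu t y| <= gamma t * `|x - y|) ->
  forall t, (t < T)%N -> forall x' x : R, x' <= x ->
    H T alpha c K G F mu theta sT1 t x' - H T alpha c K G F mu theta sT1 t x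
      <= psibar T alpha c K G F mu theta sT1 gamma t (x - x') x /\
    V T alpha c K G F mu theta sT1 t x' - V T alpha c K G F mu theta sT1 t x
      <= phibar T alpha c K G F mu theta sT1 gamma t (x - x') x.
Proof.
move=> F mu T2 a0 a1 Dge0 Dint Dind K0 Kmon Cconv th0 sT1le sT1eq hfin g0 Lip.
set st := stage_of T alpha c K G F mu theta sT1.
have stS : forall t, (t < T.-1)%N -> st t = stage_step alpha c K G F mu theta t (st t.+1).
  move=> t lt; rewrite /st /stage_of.
  have -> : (T.-1 - t = (T.-1 - t.+1).+1)%N by lia.
  rewrite stage_kS.
  by have -> : (T - 2 - (T.-1 - t.+1) = t)%N by lia.
have st0 : st T.-1 = stage_base T alpha c G mu sT1 by rewrite /st /stage_of subnn.
set phb := phibar T alpha c K G F mu theta sT1 gamma.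
set psi := psi_step T alpha c K G F mu theta sT1 gamma.
have phS : forall t, (t < T.-1)%N ->
    phb t = phi_from T alpha c K G F mu theta sT1 t (psi t (phb t.+1)).
  move=> t lt; rewrite /phb /phibar.
  have -> : (T.-1 - t = (T.-1 - t.+1).+1)%N by lia.
  rewrite phi_kS.
  by have -> : (T - 2 - (T.-1 - t.+1) = t)%N by lia.
have ph0 : phb T.-1 = phi_k T alpha c K G F mu theta sT1 gamma 0 by rewrite /phb /phibar subnn.
have fge0 : forall t n, 0 <= fdisc F theta t n.
  move=> t n; rewrite /fdisc subr_ge0 /F.
  have fn : forall r, cdf (D t) r \is a fin_num.
    by move=> r; rewrite ge0_fin_numE ?cdf_ge0 // (le_lt_trans (cdf_le1 _ _)) ?ltry.
  apply: fine_le; [exact: fn | exact: fn |].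
  apply: cdf_nondecreasing; rewrite /z ler_pM2r // ler_int lerDl //.
have psm : forall t, (t < T)%N -> forall phin : R -> R -> R,
    (forall y a b, a <= b -> phin a y <= phin b y) ->
    forall y a b, a <= b -> psi t phin a y <= psi t phin b y.
  move=> t tT phin pm y a b ab; rewrite /psi /psi_step; case: ifP => _.
    by rewrite ler_wpM2l // g0.
  apply: lerD; first by rewrite ler_wpM2l // g0.
  apply: ler_wpM2l; first exact: ltW.
  apply: ler_sum => j _; apply: ler_wpM2r => //; exact: pm.
have mono_k : forall k, (k <= T.-1)%N -> forall y a b, a <= b ->
    phi_k T alpha c K G F mu theta sT1 gamma k a y <= phi_k T alpha c K G F mu theta sT1 gamma k b y.
  elim=> [|k IH] hk y a b ab.
    rewrite /=; case: ifP => _ //; rewrite ler_wpM2l // g0 //; lia.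
  rewrite phi_kS; apply: pf_mono => //; first exact: ltW.
  apply: psm; first lia.
  apply: IH; lia.
have pz : forall t, (t < T)%N -> forall a y, y < s T alpha c K G F mu theta sT1 t -> phb t a y = 0.
  move=> t tT a y hy; case: (ltnP t T.-1) => ht.
    by rewrite phS // /phi_from ifT.
  have e : t = T.-1 by lia.
  by move: hy; rewrite e ph0 /= => hy; rewrite ifT.
set HH := H T alpha c K G F mu theta sT1.
set VV := V T alpha c K G F mu theta sT1.
set ss_ := s T alpha c K G F mu theta sT1.
pose Pr t := (forall x' x, x' <= x -> HH t x' - HH t x <= psibar T alpha c K G F mu theta sT1 gamma t (x - x') x) /\
  (forall x' x, x' <= x -> VV t x' - VV t x <= phb t (x - x') x) /\
  barI T alpha c K G F mu theta sT1 t <= ss_ t.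
have lipT : forall t, (t < T)%N -> forall x' x, x' <= x ->
    Cfun alpha c G mu t x' - Cfun alpha c G mu t x <= gamma t * (x - x').
  move=> t tT x' x xx; have h := Lip t tT x' x.
  rewrite [`|x' - x|]distrC [`|x - x'|]ger0_norm ?subr_ge0 // in h.
  exact: le_trans (ler_norm _) h.
have main : forall k, (k <= T.-1)%N -> Pr (T.-1 - k)%N.
  elim=> [|k IH] hk.
    rewrite subn0; split; [|split].
    - move=> x' x xx; rewrite /psibar eqxx /HH /H -/st st0 /=.
      apply: lipT => //; lia.
    - move=> x' x xx; rewrite /VV /V /Vof -/st ph0 /= /s -/st st0 /=.
      case: (ltP x sT1) => hx.
        by rewrite ifT ?subrr //; apply: le_lt_trans hx.
      case: (ltP x' sT1) => hx'.
        rewrite -sT1eq; apply: le_trans (lipT _ _ _ _ hx) _; first lia.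
        rewrite ler_wpM2l ?g0 //; [lia | lra].
      apply: lipT => //; lia.
    - by rewrite /barI /ss_ /s -/st st0.
  have tt1 : (T.-1 - k = (T.-1 - k.+1).+1)%N by lia.
  set t := (T.-1 - k.+1)%N.
  have ltT : (t < T.-1)%N by rewrite /t; lia.
  have tT : (t < T)%N by lia.
  have t1T : (t.+1 < T)%N by lia.
  have := IH (ltnW hk); rewrite /Pr tt1 -/t => -[IHH [IHV IHB]].
  have [KEY bIs] := @stage_facts R alpha c K G F mu theta t (st t.+1) th0 (K0 t tT) (Cconv t tT).2 IHB (st t) (stS t ltT).
  have Hb : forall x' x, x' <= x -> HH t x' - HH t x <= psi t (phb t.+1) (x - x') x.
    move=> x' x xx.
    pose a (y : R) (j : nat) := Vof K t.+1 (st t.+1) (y - z theta (j%:Z - 1)) * fdisc F theta t (j%:Z - 1).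
    have sE : forall y, sum_from_m1 (fun n => Vof K t.+1 (st t.+1) (y - z theta n) * fdisc F theta t n)
       = limn (series (a y)) by [].
    rewrite /HH /H -/st (stS t ltT) stage_step_eq /= /HFst !sE.
    pose b (j : nat) := phb t.+1 (x - x') (x - z theta (j%:Z - 1)) * fdisc F theta t (j%:Z - 1).
    have hab : forall k, a x' k - a x k <= b k.
      move=> j; rewrite /a /b -mulrBl; apply: ler_wpM2r; first exact: fge0.
      have := IHV (x' - z theta (j%:Z - 1)) (x - z theta (j%:Z - 1)) (lerB xx (lexx _)).
      by rewrite opprB addrA subrK.
    have hC := lipT t tT x' x xx.
    have cv : forall y, cvgn (series (a y)).
      move=> y; apply: normed_cvg; apply: (hfin t _ y); lia.
    set L' := limn (series (a x')).
    set L := limn (series (a x)).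
    rewrite /psi /psi_step.
    case: ifP => hx.
      have hx' : x < ss_ t.+1 - theta by rewrite hx.
      have bz : forall j, (0 <= j)%N -> b j = 0.
        move=> j _; rewrite /b pz ?mul0r //.
        have := z_ge j th0; rewrite /ss_ in hx'; lra.
      have h := @series_step R (a x') (a x) b 0%N (cv x') (cv x) hab bz.
      rewrite big_geq // -/L' -/L in h.
      have ha : alpha * (L' - L) <= 0 by apply: mulr_ge0_le0; [exact: ltW | exact: h].
      rewrite mulrBr in ha; lra.
    cbv zeta.
    have hx' : ss_ t.+1 - theta <= x by rewrite leNgt hx.
    rewrite -/ss_.
    set r := (x - ss_ t.+1) / theta.
    set n := Num.floor r + 1.
    have r1 : -1 <= r by rewrite /r ler_pdivlMr //; lra.
    have fl : -1 <= Num.floor r.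
      by rewrite floor_ge_int (_ : (-1)%:~R = -1 :> R).
    have zn : x - ss_ t.+1 < z theta n.
      have /andP[_ h] := floor_itv r.
      by rewrite /z -(ltr_pM2r th0) /r mulfVK ?gt_eqF // in h.
    have bz : forall j, (absz (n + 1)%R <= j)%N -> b j = 0.
      move=> j hj; rewrite /b pz ?mul0r //.
      have hk' : (n <= j%:Z - 1)%R by apply: absz_le_aux hj; exact: int_aux2.
      have zk : z theta n <= z theta (j%:Z - 1) by rewrite /z ler_pM2r // ler_int.
      rewrite /ss_ in zn zk; lra.
    have h := @series_step R (a x') (a x) b (absz (n + 1)) (cv x') (cv x) hab bz.
    rewrite -/L' -/L in h.
    have ha := ler_wpM2l (ltW a0) h.
    rewrite mulrBr in ha.
    move: ha; rewrite /b.
    set Sg := (X in alpha * X).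
    move=> ha; lra.
  have psm' : forall y a b, a <= b -> psi t (phb t.+1) a y <= psi t (phb t.+1) b y.
    apply: psm => // y a b ab; rewrite /phb /phibar; apply: mono_k => //; lia.
  split; [|split].
  - by rewrite /psibar (_ : (t == T.-1) = false) //; apply/eqP; lia.
  - move=> x' x xx; rewrite /VV /V (phS t ltT) /phi_from.
    exact: (@Vstep R (HH t) (S T alpha c K G F mu theta sT1 t) (ss_ t) (K t) theta _ Hb psm' KEY).
  - exact: bIs.
move=> t tT x' x xx.
have := main (T.-1 - t)%N (leq_subr _ _).
rewrite /Pr (_ : (T.-1 - (T.-1 - t) = t)%N); last by lia.
by move=> [h1 [h2 _]]; split; [exact: h1 | exact: h2].
Qed.
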